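(* Let $n,a,t\in\mathbb N$ satisfy $t<a<n$. If $\mathcal F\subseteq\binom{[n]}{a}$ and $\mathcal G\subseteq\binom{[n]}{a}$ are such that $|F\cap G|\le t$ for all $F\in\mathcal F$ and $G\in\mathcal G$, then $$|\mathcal F|\cdot|\mathcal G|\le 32\,a(n-a)\cdot e^{-(a-t-1)^2/(20a)}\binom{n}{a}^2.$$
   Context: $[n]=\{1,\dots,n\}$ and $\binom{[n]}{a}$ denotes the family of all $a$-element subsets of $[n]$. *)

(* Defs.v *)
From mathcomp Require Import all_boot.
From Stdlib Require Import Reals.

(* Main.v *)
Require Import Defs.
From HB Require Import structures.
From mathcomp Require Import all_boot.
From Stdlib Require Import Reals.
From Stdlib Require Import Lra Lia Psatz.
From mathcomp Require Import zify.

Open Scope R_scope.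
Lemma RplusA' : associative Rplus. Proof. by move=> x y z; rewrite Rplus_assoc. Qed.
HB.instance Definition _ := Monoid.isComLaw.Build R 0 Rplus RplusA' Rplus_comm Rplus_0_l.
Definition sumR {T} (s : seq T) (f : T -> R) := \big[Rplus/0]_(x <- s) f x.

Lemma sumR_nil {T} (f : T -> R) : sumR [::] f = 0.
Proof. by rewrite /sumR big_nil. Qed.
Lemma sumR_cons {T} x (s : seq T) f : sumR (x :: s) f = f x + sumR s f.
Proof. by rewrite /sumR big_cons. Qed.
Lemma sumR_cat {T} (s1 s2 : seq T) f : sumR (s1 ++ s2) f = sumR s1 f + sumR s2 f.
Proof. by rewrite /sumR big_cat. Qed.
Lemma sumR_map {T U} (g : T -> U) (s : seq T) f : sumR (map g s) f = sumR s (fun x => f (g x)).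
Proof. by rewrite /sumR big_map. Qed.
Lemma sumR_le {T : eqType} (s : seq T) f g : (forall x, x \in s -> f x <= g x) -> sumR s f <= sumR s g.
Proof.
elim: s => [|y s IH] H; rewrite ?sumR_nil ?sumR_cons; first lra.
apply Rplus_le_compat; first by apply H; rewrite mem_head.
by apply IH => x Hx; apply H; rewrite in_cons Hx orbT.
Qed.
Lemma sumR_scale {T} (s : seq T) c f : sumR s (fun x => c * f x) = c * sumR s f.
Proof. elim: s => [|y s IH]; rewrite ?sumR_nil ?sumR_cons; [ring| rewrite IH; ring]. Qed.
Lemma sumR_ge0 {T : eqType} (s : seq T) f : (forall x, 0 <= f x) -> 0 <= sumR s f.
Proof. move=> H; elim: s => [|y s IH]; rewrite ?sumR_nil ?sumR_cons; [lra| have := H y; lra]. Qed.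
Lemma sumR_elt {T : eqType} (s : seq T) f x : (forall x, 0 <= f x) -> x \in s -> f x <= sumR s f.
Proof.
move=> H; elim: s => [|y s IH] //; rewrite sumR_cons in_cons => /orP [/eqP ->|Hx].
- have := sumR_ge0 s f H; lra.
- have := IH Hx; have := H y; lra.
Qed.
Lemma sumR_const {T} (s : seq T) c : sumR s (fun _ => c) = INR (size s) * c.
Proof. elim: s => [|y s IH]; rewrite ?sumR_nil ?sumR_cons. rewrite /=; ring. rewrite IH (_ : size (y :: s) = (size s).+1) // S_INR; ring. Qed.
Lemma sumR_zero {T : eqType} (s : seq T) f : (forall x, x \in s -> f x = 0) -> sumR s f = 0.
Proof.
elim: s => [|y s IH] H; rewrite ?sumR_nil ?sumR_cons //.
rewrite H ?mem_head // IH; first ring. by move=> x Hx; apply H; rewrite in_cons Hx orbT.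
Qed.

Fixpoint cube n : seq (seq bool) :=
  if n is m.+1 then map (cons true) (cube m) ++ map (cons false) (cube m) else [:: [::]].

Lemma consb_inj (b : bool) : injective (cons b). Proof. by move=> x y []. Qed.

Lemma cube_mem n x : (x \in cube n) = (size x == n).
Proof.
elim: n x => [|n IH] [|b x] //=; rewrite mem_cat.
  by apply/norP; split; apply/mapP => [[y _]].
rewrite eqSS -IH; case: b.
- rewrite (mem_map (consb_inj true)). case: (x \in cube n) => //=.
  by apply/mapP => [[y _]].
- rewrite (mem_map (consb_inj false)). case: (x \in cube n); rewrite ?orbT //= orbF.
  by apply/mapP => [[y _]].
Qed.
Lemma key1 z K M m0 m1 E0 E1 : 1 <= z -> 0 <= K -> 0 < M -> 0 <= m1 -> m1 <= m0 -> m0 <= M ->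
  0 <= E0 -> 0 <= E1 -> E1 * M <= z * K -> E0 * m0 <= K -> E1 * m1 <= K ->
  E1 * m0 + E0 * m1 <= K * (z + / z).
Proof.
intros Hz HK HM Hm1 Hm10 Hm0 HE0 HE1 H1 H2 H3.
assert (Hz0 : 0 < z) by lra.
destruct (Rle_lt_dec (z * m1) m0) as [Hc|Hc].
- assert (E0 * m1 <= K / z).
  { apply Rmult_le_reg_l with z; [lra|]. field_simplify; [|lra].
    assert (E0 * (z*m1) <= E0 * m0) by (apply Rmult_le_compat_l; lra). nra. }
  assert (E1 * m0 <= E1 * M) by (apply Rmult_le_compat_l; lra).
  unfold Rdiv in *. nra.
- assert (Hm1p : 0 < m1) by nra.
  assert (Hm0p : 0 < m0) by lra.
  assert (A1 : E1 * m0 <= K * (m0 / m1)).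
  { apply Rmult_le_reg_l with m1; [lra|]. field_simplify; [|lra]. nra. }
  assert (A2 : E0 * m1 <= K * (m1 / m0)).
  { apply Rmult_le_reg_l with m0; [lra|]. field_simplify; [|lra]. nra. }
  set (r := m0 / m1).
  assert (Hr1 : 1 <= r). { unfold r. apply Rmult_le_reg_l with m1; [lra|]. field_simplify; lra. }
  assert (Hrz : r <= z). { unfold r. apply Rmult_le_reg_l with m1; [lra|]. field_simplify; lra. }
  assert (Hinv : m1 / m0 = / r). { unfold r. field. lra. }
  rewrite Hinv in A2.
  assert (r + / r <= z + / z).
  { assert (0 < r) by lra.
    apply Rmult_le_reg_l with (r * z); [nra|].
    field_simplify. all: try lra. assert (0 <= (z - r) * (r*z - 1)) by (apply Rmult_le_pos; nra). nra. }
  assert (K * (r + / r) <= K * (z + / z)) by (apply Rmult_le_compat_l; lra).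
  fold r in A1. rewrite Rmult_plus_distr_l in H0. lra.
Qed.
Lemma key2 p q z K M m0 m1 E0 E1 : 0 <= p -> 0 <= q -> p + q = 1 -> 1 <= z -> 0 <= K -> 0 < M ->
  0 <= m0 -> 0 <= m1 -> m0 <= M -> m1 <= M ->
  0 <= E0 -> 0 <= E1 -> E1 * M <= z * K -> E0 * M <= z * K -> E0 * m0 <= K -> E1 * m1 <= K ->
  (p * E1 + q * E0) * (p * m1 + q * m0) <= K * (1 + p * q * (z + / z - 2)).
Proof.
intros Hp Hq Hpq Hz HK HM Hm0 Hm1 Hm0M Hm1M HE0 HE1 H1 H0 H2 H3.
assert (S : E1 * m0 + E0 * m1 <= K * (z + / z)).
{ destruct (Rle_lt_dec m1 m0).
  - apply (key1 z K M m0 m1 E0 E1); lra.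
  - assert (E0 * m1 + E1 * m0 <= K * (z + / z)) by (apply (key1 z K M m1 m0 E1 E0); lra). lra. }
assert (X : (p * E1 + q * E0) * (p * m1 + q * m0) = p*p*(E1*m1) + q*q*(E0*m0) + p*q*(E1 * m0 + E0 * m1)) by ring.
rewrite X.
assert (p*p*(E1*m1) <= p*p*K) by (apply Rmult_le_compat_l; nra).
assert (q*q*(E0*m0) <= q*q*K) by (apply Rmult_le_compat_l; nra).
assert (p*q*(E1 * m0 + E0 * m1) <= p*q*(K * (z + / z))) by (apply Rmult_le_compat_l; nra).
assert (E : K * (1 + p * q * (z + / z - 2)) = p*p*K + q*q*K + p*q*(K * (z + / z))).
{ replace q with (1 - p) by lra. ring. }
rewrite E. lra.
Qed.

Close Scope R_scope.
Fixpoint ham (x y : seq bool) : nat :=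
  match x, y with b :: x', c :: y' => ((b != c) + ham x' y')%N | _, _ => 0%N end.

Lemma ham_le x y : (ham x y <= size y)%nat.
Proof. elim: x y => [|b x IH] [|c y] //=. by case: (b != c); rewrite ?add1n ?add0n ?ltnS ?IH // (leq_trans (IH y)). Qed.

Definition dmin (A : pred (seq bool)) (x : seq bool) (s : seq (seq bool)) (d0 : nat) : nat :=
  foldr (fun y m => if A y then minn (ham x y) m else m) d0 s.

Lemma dmin_le (A : pred (seq bool)) x s d0 y : y \in s -> A y -> (dmin A x s d0 <= ham x y)%nat.
Proof.
elim: s => [|y' s IH] //; rewrite in_cons => /orP [/eqP <- Ay|Hy Ay] /=.
- by rewrite Ay geq_minl.
- case: (A y'); last by apply IH.
  exact: leq_trans (geq_minr _ _) (IH Hy Ay).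
Qed.

Lemma dmin_cases (A : pred (seq bool)) x s d0 : dmin A x s d0 = d0 \/ exists2 y, y \in s & A y /\ dmin A x s d0 = ham x y.
Proof.
elim: s => [|y s IH] /=; first by left.
case Ay: (A y); last first.
  case: IH => [->|[y' Hy' H]]; [by left | by right; exists y' => //; rewrite in_cons Hy' orbT].
case: (leqP (ham x y) (dmin A x s d0)) => H.
- right; exists y; first by rewrite mem_head.
  by [].
- case: IH => [->|[y' Hy' H']]; [by left | by right; exists y' => //; rewrite in_cons Hy' orbT].
Qed.

Definition dist n (A : pred (seq bool)) x := dmin A x (cube n) n.+1.

Lemma dist_le n (A : pred (seq bool)) x y : y \in cube n -> A y -> (dist n A x <= ham x y)%nat.
Proof. exact: dmin_le. Qed.

Lemma dist_ex n (A : pred (seq bool)) x : has A (cube n) -> exists2 y, y \in cube n & A y /\ dist n A x = ham x y.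
Proof.
move=> /hasP [y0 Hy0 Ay0].
case: (dmin_cases A x (cube n) n.+1) => // H.
have := @dist_le n A x y0 Hy0 Ay0; rewrite /dist H.
have := ham_le x y0; rewrite cube_mem in Hy0; rewrite (eqP Hy0) => H1 H2.
by have := leq_trans H2 H1; rewrite ltnn.
Qed.

Open Scope R_scope.

Section Tal.
Variables p q z : R.
Hypotheses (Hp : 0 < p) (Hq : 0 < q) (Hpq : p + q = 1) (Hz : 1 <= z).

Fixpoint w (x : seq bool) : R := match x with [::] => 1 | b :: x' => (if b then p else q) * w x' end.
Lemma w_pos x : 0 < w x.
Proof. elim: x => [|b x IH] /=; first lra. case: b; apply Rmult_lt_0_compat; lra. Qed.

Definition mu n (A : pred (seq bool)) := sumR (cube n) (fun x => if A x then w x else 0).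
Definition EE n (A : pred (seq bool)) := sumR (cube n) (fun x => w x * z ^ dist n A x).
Definition cc := 1 + p * q * (z + / z - 2).

Lemma cc_ge1 : 1 <= cc.
Proof.
rewrite /cc. have Hz0 : 0 < z by lra.
have : 2 <= z + / z.
  apply Rmult_le_reg_l with z => //. field_simplify; last lra.
  have : 0 <= (z - 1) * (z - 1) by nra. nra.
move=> H. have : 0 <= p * q by nra. nra.
Qed.

Lemma sumR_cubeS n f : sumR (cube n.+1) f = sumR (cube n) (fun x => f (true :: x)) + sumR (cube n) (fun x => f (false :: x)).
Proof. by rewrite /= sumR_cat !sumR_map. Qed.

Lemma cube_cons n b y : (b :: y \in cube n.+1) = (y \in cube n).
Proof. by rewrite !cube_mem. Qed.

Lemma dist_sec n (A : pred (seq bool)) b x : has (fun y => A (b :: y)) (cube n) ->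
  (dist n.+1 A (b :: x) <= dist n (fun y => A (b :: y)) x)%nat.
Proof.
move=> /(dist_ex n _ x) [y Hy [Ay ->]].
have Hy' : b :: y \in cube n.+1 by rewrite cube_cons.
apply: leq_trans (@dist_le _ _ _ _ Hy' Ay) _; by rewrite /= eqxx add0n.
Qed.

Lemma dist_proj n (A : pred (seq bool)) b x :
  has (fun y => A (true :: y) || A (false :: y)) (cube n) ->
  (dist n.+1 A (b :: x) <= (dist n (fun y => A (true :: y) || A (false :: y)) x).+1)%nat.
Proof.
move=> /(dist_ex n _ x) [y Hy [/orP By ->]].
case: By => Ay.
- have Hy' : true :: y \in cube n.+1 by rewrite cube_cons.
  apply: leq_trans (@dist_le _ _ _ _ Hy' Ay) _; rewrite /=; by case: (b != true).
- have Hy' : false :: y \in cube n.+1 by rewrite cube_cons.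
  apply: leq_trans (@dist_le _ _ _ _ Hy' Ay) _; rewrite /=; by case: (b != false).
Qed.

Lemma talagrand n (A : pred (seq bool)) : has A (cube n) -> EE n A * mu n A <= cc ^ n.
Proof.
elim: n A => [|n IH] A HA.
  have A0 : A [::] by move: HA => /=; rewrite orbF.
  rewrite /EE /mu /= !sumR_cons !sumR_nil /dist /dmin /= A0 /=. lra.
pose A1 := fun y => A (true :: y).
pose A0 := fun y => A (false :: y).
pose B := fun y => A (true :: y) || A (false :: y).
have HB : has B (cube n).
  move/hasP: HA => [x Hx Ax]; rewrite cube_mem in Hx.
  case: x Hx Ax => [|b x] //= Hx Ax; apply/hasP; exists x; first by rewrite cube_mem.
  by rewrite /B; case: b Ax => ->; rewrite ?orbT.
have Hmu : mu n.+1 A = p * mu n A1 + q * mu n A0.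
  rewrite /mu sumR_cubeS -!sumR_scale; congr (_ + _); rewrite /sumR; apply: eq_bigr => x _ /=;
  rewrite /A1 /A0; case: (A _); ring.
pose E1 := sumR (cube n) (fun x => w x * z ^ dist n.+1 A (true :: x)).
pose E0 := sumR (cube n) (fun x => w x * z ^ dist n.+1 A (false :: x)).
have HE : EE n.+1 A = p * E1 + q * E0.
  rewrite /EE sumR_cubeS /E1 /E0 -!sumR_scale; congr (_ + _); rewrite /sumR; apply: eq_bigr => x _ /=; ring.
have Hw := w_pos.
have Hz0 : 0 < z by lra.
have Hzp : forall k, 0 < z ^ k by move=> k; apply pow_lt.
have Hmge0 : forall C, 0 <= mu n C.
  move=> C; apply: sumR_ge0 => x; case: (C x); [have := Hw x|]; lra.
have HEge0 : forall f, 0 <= sumR (cube n) (fun x => w x * z ^ f x).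
  move=> f; apply: sumR_ge0 => x; have := Hw x; have := Hzp (f x); nra.
have HmB : forall C : pred (seq bool), (forall x, C x -> B x) -> mu n C <= mu n B.
  move=> C HC; apply: sumR_le => x _; case Cx: (C x); first by rewrite (HC _ Cx); lra.
  case: (B x); [have := Hw x|]; lra.
have HM : 0 < mu n B.
  move/hasP: HB => [x Hx Bx].
  have := @sumR_elt _ (cube n) (fun x => if B x then w x else 0) x.
  rewrite Bx => H; have := Hw x; have : w x <= mu n B.
    by apply: H => // y; case: (B y); [have := Hw y|]; lra.
  lra.
have HK : 0 <= cc ^ n by apply pow_le; have := cc_ge1; lra.
have IHB := IH B HB.
have Hproj : forall b, sumR (cube n) (fun x => w x * z ^ dist n.+1 A (b :: x)) <= z * EE n B.
  move=> b; rewrite /EE -sumR_scale; apply: sumR_le => x _.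
  have : z ^ dist n.+1 A (b :: x) <= z ^ (dist n B x).+1.
    by apply: Rle_pow => //; apply/leP; apply: dist_proj.
  rewrite [z ^ _.+1]/= => H; have := Hw x; nra.
have Hsec : forall b, let Ab := (fun y => A (b :: y)) in
   sumR (cube n) (fun x => w x * z ^ dist n.+1 A (b :: x)) * mu n Ab <= cc ^ n.
  move=> b Ab; case HAb: (has Ab (cube n)).
  - apply: Rle_trans (IH Ab HAb).
    apply Rmult_le_compat_r; first exact: Hmge0.
    apply: sumR_le => x _.
    have : z ^ dist n.+1 A (b :: x) <= z ^ (dist n Ab x).
      by apply: Rle_pow => //; apply/leP; apply: dist_sec.
    move=> H; have := Hw x; nra.
  - have -> : mu n Ab = 0.
      apply: sumR_zero => x Hx; move/hasPn: HAb => /(_ x Hx) /negbTE -> //.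
    rewrite Rmult_0_r; exact HK.
have H1 := Hproj true. have H0 := Hproj false.
have S1 := Hsec true. have S0 := Hsec false. simpl in S1, S0.
rewrite HE Hmu /=.
have E1M : E1 * mu n B <= z * cc ^ n.
  have : E1 * mu n B <= z * EE n B * mu n B by apply Rmult_le_compat_r; [lra|exact H1].
  have := HEge0 (dist n B); nra.
have E0M : E0 * mu n B <= z * cc ^ n.
  have : E0 * mu n B <= z * EE n B * mu n B by apply Rmult_le_compat_r; [lra|exact H0].
  have := HEge0 (dist n B); nra.
have Hk : (p * E1 + q * E0) * (p * mu n A1 + q * mu n A0) <= cc ^ n * cc.
  apply: (key2 p q z (cc ^ n) (mu n B) (mu n A0) (mu n A1) E0 E1); try lra.
  - exact: (Hmge0).
  - exact: (Hmge0).
  - apply: (HmB A0); move=> x; rewrite /B /A0 => ->; by rewrite orbT.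
  - apply: (HmB A1); move=> x; rewrite /B /A1 => ->; by [].
  - exact: (HEge0).
  - exact: (HEge0).
  - exact S0.
  - exact S1.
by rewrite (Rmult_comm cc).
Qed.
End Tal.

Close Scope R_scope.
Section Mode.
Variables n a : nat.
Hypothesis Han : (0 < a < n)%N.
Definition fm k := 'C(n, k) * (expn a k * expn (n - a) (n - k)).

Lemma fm_step k : k < n -> fm k.+1 * (k.+1 * (n - a)) = fm k * ((n - k) * a).
Proof.
move=> Hk; rewrite /fm.
have e : n - k = (n - k.+1).+1 by rewrite subnSK.
rewrite e expnS [expn (n - a) (n - k.+1).+1]expnS.
have := mul_bin_left n k. rewrite -e.
set C1 := 'C(n, k.+1); set C0 := 'C(n, k); set X := expn a k; set Y := expn (n - a) (n - k.+1).
move=> H.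
have -> : C1 * (a * X * Y) * (k.+1 * (n - a)) = (k.+1 * C1) * (a * X * Y * (n - a)) by nia.
rewrite H; nia.
Qed.

Lemma fm_dec k : a <= k -> k < n -> fm k.+1 <= fm k.
Proof.
move=> Hak Hk; have H := @fm_step k Hk.
have Hpos : 0 < k.+1 * (n - a) by rewrite muln_gt0 /=; lia.
rewrite -(leq_pmul2r Hpos) H.
apply: leq_mul => //; nia.
Qed.

Lemma fm_inc k : k < a -> fm k <= fm k.+1.
Proof.
move=> Hk; have Hkn : k < n by lia.
have H := @fm_step k Hkn.
have Hpos : 0 < k.+1 * (n - a) by rewrite muln_gt0 /=; lia.
rewrite -(leq_pmul2r Hpos) H.
apply: leq_mul => //; nia.
Qed.

Lemma fm_max i : i <= n -> fm i <= fm a.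
Proof.
move=> Hi; case: (leqP a i) => Hai.
- have : forall d, a + d <= n -> fm (a + d) <= fm a.
    elim => [|d IH] Hd; first by rewrite addn0.
    rewrite addnS.
    have h1 : fm (a + d).+1 <= fm (a + d) by apply: fm_dec; lia.
    apply: leq_trans h1 (IH _); lia.
  by move/(_ (i - a)); rewrite subnKC //; apply.
- have : forall d, d <= a -> fm (a - d) <= fm a.
    elim => [|d IH] Hd; first by rewrite subn0.
    apply: leq_trans (IH _); last lia.
    have e : a - d = (a - d.+1).+1 by lia.
    rewrite e; apply: fm_inc; lia.
  by move/(_ (a - i)); rewrite subKn ?(ltnW Hai) //; apply; lia.
Qed.

Lemma mode_bound : expn n n <= n.+1 * ('C(n, a) * (expn a a * expn (n - a) (n - a))).
Proof.
have e : n = (n - a) + a by lia.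
rewrite {1 2}e expnDn -e.
have -> : n.+1 * ('C(n, a) * (expn a a * expn (n - a) (n - a))) = \sum_(i < n.+1) fm a.
  by rewrite sum_nat_const card_ord.
apply: leq_sum => i _.
have -> : 'C(n, i) * (expn (n - a) (n - i) * expn a i) = fm i by rewrite /fm mulnC [in RHS]mulnC; congr (_ * _); rewrite mulnC.
apply: fm_max; exact: (ltn_ord i).
Qed.
End Mode.

Open Scope R_scope.


Lemma INR_muln m k : INR (m * k)%nat = INR m * INR k.
Proof. by rewrite -mult_INR mulnE. Qed.
Lemma INR_addn m k : INR (m + k)%nat = INR m + INR k.
Proof. by rewrite -plus_INR addnE. Qed.
Lemma INR_expn m k : INR (expn m k) = INR m ^ k.
Proof. elim: k => [|k IH]; first by rewrite expn0. by rewrite expnS INR_muln IH. Qed.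
Lemma INR_subn m k : (k <= m)%nat -> INR (m - k)%nat = INR m - INR k.
Proof. move=> H; rewrite subnE minus_INR //; exact/leP. Qed.
Lemma INR_leq {m k} : (m <= k)%nat -> INR m <= INR k.
Proof. by move=> H; apply le_INR; apply/leP. Qed.

Lemma exp_pow_nat u k : exp u ^ k = exp (INR k * u).
Proof.
elim: k => [|k IH]; first by rewrite /= Rmult_0_l exp_0.
by rewrite [exp u ^ _.+1]/= IH S_INR -exp_plus; congr exp; ring.
Qed.

Lemma pow_le_exp u k : 0 <= u -> (1 + u) ^ k <= exp (INR k * u).
Proof.
move=> Hu; rewrite -exp_pow_nat; apply pow_incr; split; first lra.
exact: exp_ineq1_le.
Qed.

Lemma zbound l : 0 <= l <= 1/2 -> exp l + / exp l - 2 <= 8/3 * (l * l).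
Proof.
move=> Hl.
have H1 : 1 + l <= exp l by apply exp_ineq1_le.
have H2 : 1 - l <= exp (- l) by have := exp_ineq1_le (- l); lra.
rewrite exp_Ropp in H2.
have Hel : 0 < exp l by apply exp_pos.
have A : exp l <= / (1 - l).
  rewrite -(Rinv_inv (exp l)); apply Rinv_le_contravar; lra.
have B : / exp l <= / (1 + l) by apply Rinv_le_contravar; lra.
have C : / (1 - l) + / (1 + l) - 2 = 2 * (l * l) / ((1 - l) * (1 + l)).
  field; lra.
have D : 2 * (l * l) / ((1 - l) * (1 + l)) <= 8/3 * (l * l).
  have den : 3/4 <= (1-l)*(1+l) by nra.
  have i1 : / ((1-l)*(1+l)) <= / (3/4) by apply Rinv_le_contravar; lra.
  have e : / (3/4) = 4/3 by field.
  rewrite e in i1.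
  have i2 : 0 <= 2*(l*l) by nra.
  have : 2 * (l * l) * / ((1 - l) * (1 + l)) <= 2 * (l * l) * (4/3) by apply Rmult_le_compat_l.
  unfold Rdiv; lra.
lra.
Qed.

Lemma real_core an nn s : 1 <= an -> an < nn -> 1 <= s <= an ->
  let l := s / (2 * an) in
  nn * ((an / nn) * ((nn - an) / nn) * (exp l + / exp l - 2)) + (s - 1) ^ 2 / (10 * an)
  <= INR 2 * s * l.
Proof.
move=> Ha Hn Hs l.
have Hl : 0 <= l <= 1/2.
  rewrite /l; split; first (apply Rmult_le_pos; [lra| apply Rlt_le, Rinv_0_lt_compat; lra]).
  apply Rmult_le_reg_r with (2 * an); first lra. field_simplify; lra.
have Z := zbound l Hl.
have G0 : 0 <= exp l + / exp l - 2.
  have := exp_ineq1_le l; have := exp_ineq1_le (- l); rewrite exp_Ropp. 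
  have : 0 < exp l by apply exp_pos.
  move=> h1 h2 h3.
  have : 1 <= exp l * (exp l + / exp l - 1).
    have -> : exp l * (exp l + / exp l - 1) = exp l * exp l - exp l + 1 by field; lra.
    nra.
  nra.
have P : nn * ((an / nn) * ((nn - an) / nn)) <= an.
  have -> : nn * ((an / nn) * ((nn - an) / nn)) = an * ((nn - an) / nn) by field; lra.
  have h : (nn - an)/nn <= 1.
    apply Rmult_le_reg_r with nn; first lra. field_simplify; lra.
  nra.
have P0 : 0 <= nn * ((an / nn) * ((nn - an) / nn)).
  have -> : nn * ((an / nn) * ((nn - an) / nn)) = an * ((nn - an) / nn) by field; lra.
  apply Rmult_le_pos; first lra. apply Rmult_le_pos; first lra. apply Rlt_le, Rinv_0_lt_compat; lra.
have E1 : nn * ((an / nn) * ((nn - an) / nn) * (exp l + / exp l - 2)) <= an * (8/3 * (l * l)).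
  rewrite -Rmult_assoc. apply Rmult_le_compat; lra.
have E2 : (s - 1) ^ 2 / (10 * an) <= s * s / (10 * an).
  apply Rmult_le_compat_r; first (apply Rlt_le, Rinv_0_lt_compat; lra). nra.
have E3 : an * (8/3 * (l * l)) + s * s / (10 * an) <= INR 2 * s * l.
  rewrite /l /=. apply Rmult_le_reg_r with (30 * an); first lra.
  field_simplify; try lra. nra.
lra.
Qed.

Lemma cube_uniq n : uniq (cube n).
Proof.
elim: n => [|n IH] //=.
rewrite cat_uniq !(map_inj_uniq (consb_inj _)) IH andbT /=.
apply/hasPn => x /mapP [y _ ->]; apply/mapP => [[y' _]] //.
Qed.

Definition enc {n} (A : {set 'I_n}) : seq bool := [seq i \in A | i <- enum 'I_n].

Lemma enc_cube n (A : {set 'I_n}) : enc A \in cube n.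
Proof. by rewrite cube_mem size_map size_enum_ord. Qed.

Lemma enc_inj n : injective (@enc n).
Proof.
move=> A B H; apply/setP => i.
have := congr1 (fun s => nth false s i) H.
have Hs : (i < size (enum 'I_n))%nat by rewrite size_enum_ord.
by rewrite /enc !(nth_map i _ _ Hs) nth_ord_enum.
Qed.

Lemma count_card (T : finType) (P : pred T) : count P (enum T) = #|P|.
Proof. by rewrite enumT cardE /enum_mem size_filter. Qed.

Lemma w_map p q (T : Type) (P : pred T) (s : seq T) :
  w p q (map P s) = p ^ count P s * q ^ (size s - count P s).
Proof.
elim: s => [|x s IH]; first by rewrite /=; ring.
have e1 : count P (x :: s) = (P x + count P s)%nat by [].
have e2 : size (x :: s) = (size s).+1 by [].
rewrite [w _ _ _]/= IH e1 e2; case: (P x).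
- rewrite add1n subSS [p ^ _.+1]/=; ring.
- rewrite add0n subSn ?count_size // [q ^ _.+1]/=; ring.
Qed.

Lemma w_enc p q n (A : {set 'I_n}) : w p q (enc A) = p ^ #|A| * q ^ (n - #|A|).
Proof. by rewrite /enc w_map count_card size_enum_ord. Qed.

Lemma ham_map (T : Type) (P Q : pred T) (s : seq T) :
  ham (map P s) (map Q s) = count (fun i => P i != Q i) s.
Proof. by elim: s => [|x s IH] //=; rewrite IH. Qed.

Lemma ham_enc_ge n (A B : {set 'I_n}) a t :
  #|A| = a -> #|B| = a -> (#|A :&: B| <= t)%nat -> (2 * (a - t) <= ham (enc A) (enc B))%nat.
Proof.
move=> HA HB HAB.
rewrite /enc ham_map count_card.
have S : (A :\: B) :|: (B :\: A) \subset [pred i | (i \in A) != (i \in B)].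
  apply/subsetP => i; rewrite !inE; by case: (i \in A); case: (i \in B).
have := subset_leq_card S.
have D : (A :\: B) :&: (B :\: A) = set0.
  apply/setP => i; rewrite !inE; by case: (i \in A); case: (i \in B).
rewrite cardsU D cards0 subn0 !cardsD HA HB [B :&: A]setIC.
move=> H; apply: leq_trans H; lia.
Qed.

Lemma W_eq an bn nn a b : 0 < nn -> (an / nn) ^ a * (bn / nn) ^ b * nn ^ (a + b) = an ^ a * bn ^ b.
Proof.
move=> Hn; rewrite pow_add.
have -> : (an / nn) ^ a * (bn / nn) ^ b * (nn ^ a * nn ^ b) = ((an / nn) ^ a * nn ^ a) * ((bn / nn) ^ b * nn ^ b) by ring.
rewrite -!Rpow_mult_distr.
have -> : an / nn * nn = an by field; lra.
have -> : bn / nn * nn = bn by field; lra.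
done.
Qed.

Lemma mu_enc p q n (F : {set {set 'I_n}}) a : (forall A, A \in F -> #|A| = a) ->
  mu p q n (fun x => x \in map (@enc n) (enum F)) = INR #|F| * (p ^ a * q ^ (n - a)).
Proof.
move=> HF.
rewrite /mu /sumR -big_mkcond -big_filter.
have P : perm_eq [seq x <- cube n | x \in map (@enc n) (enum F)] (map (@enc n) (enum F)).
  apply: uniq_perm.
  - exact: filter_uniq (cube_uniq n).
  - rewrite (map_inj_uniq (@enc_inj n)); exact: enum_uniq.
  - move=> x; rewrite mem_filter; apply/andP/idP => [[]//|Hx]; split => //.
    by move/mapP: Hx => [A _ ->]; apply: enc_cube.
rewrite (perm_big _ P) big_map.
rewrite (eq_big_seq (fun _ => p ^ a * q ^ (n - a))); last first.
  by move=> A; rewrite mem_enum => HA; rewrite w_enc (HF A HA).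
by rewrite -/(sumR _ _) sumR_const cardE.
Qed.

Lemma exp_le_mono x y : x <= y -> exp x <= exp y.
Proof. move=> [H|->]; [left; exact: exp_increasing | right; reflexivity]. Qed.

Close Scope R_scope.
Delimit Scope nat_scope with N.

Theorem theorem4 (n a t : nat) (F G : {set {set 'I_n}}) :
  (t < a)%N -> (a < n)%N ->
  (forall A : {set 'I_n}, A \in F -> #|A| = a) ->
  (forall B : {set 'I_n}, B \in G -> #|B| = a) ->
  (forall A B : {set 'I_n}, A \in F -> B \in G -> (#|A :&: B| <= t)%N) ->
  (INR #|F| * INR #|G| <=
     32 * INR a * INR (n - a)
     * exp (- ((INR a - INR t - 1) ^ 2) / (20 * INR a))
     * (INR 'C(n, a)) ^ 2)%R.
Proof.
Open Scope R_scope.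
move=> Hta Han HF HG HFG.
have Ha1 : (1 <= a)%nat by lia.
have Han1 : 1 <= INR a by have := INR_leq Ha1.
have Hann : INR a < INR n by apply lt_INR; apply/ltP.
have Hbn : INR (n - a) = INR n - INR a by rewrite INR_subn // ltnW.
have He : 0 < exp (- ((INR a - INR t - 1) ^ 2) / (20 * INR a)) by apply exp_pos.
have HC0 : 0 <= INR 'C(n, a) by apply pos_INR.
have HRHS0 : 0 <= 32 * INR a * INR (n - a) * exp (- ((INR a - INR t - 1) ^ 2) / (20 * INR a)) * (INR 'C(n, a)) ^ 2.
  rewrite Hbn; apply Rmult_le_pos; last by apply pow_le.
  apply Rmult_le_pos; last lra. apply Rmult_le_pos; lra.
case: (posnP #|F|) => [F0|Fpos].
  by rewrite F0 /= Rmult_0_l.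
case: (posnP #|G|) => [G0|Gpos].
  by rewrite G0 /= Rmult_0_r.
have HFC : (#|F| <= 'C(n, a))%nat.
  have := card_draws 'I_n a; rewrite card_ord => <-.
  apply: subset_leq_card; apply/subsetP => A HA; by rewrite inE (HF A HA).
have HGC : (#|G| <= 'C(n, a))%nat.
  have := card_draws 'I_n a; rewrite card_ord => <-.
  apply: subset_leq_card; apply/subsetP => A HA; by rewrite inE (HG A HA).
move/card_gt0P: Fpos => [A0 HA0].
have HXf' : (0 <= INR #|F| <= INR 'C(n, a)) by split; [apply pos_INR | apply INR_leq].
have HXg' : (0 <= INR #|G| <= INR 'C(n, a)) by split; [apply pos_INR | apply INR_leq].
have Hs0 : INR (a - t) = INR a - INR t by rewrite INR_subn // ltnW.
have Hs1 : 1 <= INR (a - t) by apply: (INR_leq (m := 1)); lia.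
have Hsa : INR (a - t) <= INR a by apply: INR_leq; apply: leq_subr.
have Hm := INR_leq ((@mode_bound n a ltac:(lia))).
rewrite !INR_muln !INR_expn S_INR Hbn in Hm.
have HK : INR n + 1 <= 32 * INR a * (INR n - INR a).
  have : (n.+1 <= 32 * a * (n - a))%nat by nia.
  move/INR_leq; rewrite !INR_muln S_INR Hbn (INR_IZR_INZ 32) //.
rewrite Hbn.
have Hnn0 : 0 <= INR n by apply pos_INR.
remember (INR a) as an eqn:Ean.
remember (INR n) as nn eqn:Enn.
remember (INR 'C(n, a)) as Cr eqn:ECr.
remember (INR #|F|) as Xf eqn:EXf.
remember (INR #|G|) as Xg eqn:EXg.
remember (INR (a - t)) as s eqn:Es.
remember (exp (- ((an - INR t - 1) ^ 2) / (20 * an))) as e eqn:Ee.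
remember (an / nn) as p eqn:Ep.
remember ((nn - an) / nn) as q eqn:Eq.
remember (s / (2 * an)) as l eqn:El.
remember (exp l) as z eqn:Ez.
have Hp : 0 < p by rewrite Ep; unfold Rdiv; apply Rmult_lt_0_compat; [lra | apply Rinv_0_lt_compat; lra].
have Hq : 0 < q by rewrite Eq; unfold Rdiv; apply Rmult_lt_0_compat; [lra | apply Rinv_0_lt_compat; lra].
have Hpq : p + q = 1 by rewrite Ep Eq; field; lra.
have Hl : 0 <= l by rewrite El; unfold Rdiv; apply Rmult_le_pos; [lra | apply Rlt_le, Rinv_0_lt_compat; lra].
have Hz : 1 <= z by rewrite Ez; have := exp_ineq1_le l; lra.
pose PF := fun x => x \in map (@enc n) (enum F).
pose PG := fun x => x \in map (@enc n) (enum G).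
have hasPF : has PF (cube n).
  apply/hasP; exists (enc A0); first exact: enc_cube.
  by rewrite /PF; apply/mapP; exists A0; rewrite ?mem_enum.
have HT := @talagrand p q z Hp Hq Hpq Hz n PF hasPF.
have HmuF : mu p q n PF = Xf * (p ^ a * q ^ (n - a)) by rewrite EXf; apply: mu_enc.
have HmuG : mu p q n PG = Xg * (p ^ a * q ^ (n - a)) by rewrite EXg; apply: mu_enc.
have Hw := @w_pos p q Hp Hq.
have HEE : mu p q n PG * z ^ (2 * (a - t))%nat <= EE p q z n PF.
  rewrite /mu Rmult_comm -sumR_scale /EE. apply: sumR_le => x Hx.
  case PGx: (PG x); last first.
    have := Hw x; have : 0 < z ^ dist n PF x by apply pow_lt; lra. nra.
  move: PGx => /mapP [B HB ->]; rewrite mem_enum in HB.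
  have [y Hy [PFy ->]] := dist_ex n PF (enc B) hasPF.
  move/mapP: PFy => [A HA ->]; rewrite mem_enum in HA.
  have Hh : (2 * (a - t) <= ham (enc B) (enc A))%nat.
    apply: ham_enc_ge; [exact: HG | exact: HF | rewrite setIC; exact: HFG].
  have : z ^ (2 * (a - t))%nat <= z ^ ham (enc B) (enc A) by apply Rle_pow => //; apply/leP.
  have := Hw (enc B). nra.
remember (p ^ a * q ^ (n - a)) as W eqn:EW.
have HW0 : 0 < W by rewrite EW; apply Rmult_lt_0_compat; apply pow_lt.
have Hzk : 0 < z ^ (2 * (a - t))%nat by apply pow_lt; lra.
have HQ : Xf * Xg * (W * W) * z ^ (2 * (a - t))%nat <= cc p q z ^ n.
  apply: Rle_trans HT.
  have h1 : 0 <= mu p q n PF by rewrite HmuF; apply Rmult_le_pos; lra.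
  have := Rmult_le_compat_r _ _ _ h1 HEE.
  rewrite HmuF HmuG. nra.
have HV : 1 <= (nn + 1) * Cr * W.
  have HWe := W_eq an (nn - an) nn a (n - a) ltac:(lra).
  rewrite subnKC ?(ltnW Han) // in HWe.
  have Hnn : 0 < nn ^ n by apply pow_lt; lra.
  have e1 : W * nn ^ n = an ^ a * (nn - an) ^ (n - a) by rewrite -HWe EW Ep Eq.
  apply Rmult_le_reg_r with (nn ^ n) => //.
  rewrite Rmult_1_l Rmult_assoc e1. lra.
have Hu : 0 <= p * q * (z + / z - 2) by have := @cc_ge1 p q z Hp Hq Hpq Hz; rewrite /cc; lra.
have Hcc : cc p q z ^ n <= exp (nn * (p * q * (z + / z - 2))).
  by rewrite Enn; apply: pow_le_exp.
have Hzk2 : z ^ (2 * (a - t))%nat = exp (INR 2 * s * l).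
  by rewrite Ez exp_pow_nat INR_muln -Es Rmult_assoc.
have Hcore := @real_core an nn s Han1 Hann (conj Hs1 Hsa).
cbv zeta in Hcore; rewrite -El -Ez -Ep -Eq in Hcore.
have Hee : e * e = exp (- ((s - 1) ^ 2 / (10 * an))).
  rewrite Ee -exp_plus Hs0; congr exp; field; lra.
have Hexp : exp (nn * (p * q * (z + / z - 2))) <= e * e * exp (INR 2 * s * l).
  rewrite Hee -exp_plus.
  apply: exp_le_mono.
  lra.
have HX : Xf * Xg * (W * W) <= e * e.
  apply Rmult_le_reg_r with (exp (INR 2 * s * l)); first by apply exp_pos.
  rewrite -Hzk2 in Hexp *; lra.
have HCr : Xf * Xg <= Cr * Cr by apply Rmult_le_compat; lra.
have Hmain : Xf * Xg <= (nn + 1) * (nn + 1) * (Cr * Cr) * (e * e).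
  have h0 : 0 <= Xf * Xg by nra.
  have h2 : Xf * Xg <= Xf * Xg * (((nn + 1) * Cr * W) * ((nn + 1) * Cr * W)).
    have : 1 <= ((nn + 1) * Cr * W) * ((nn + 1) * Cr * W) by nra.
    nra.
  apply: Rle_trans h2 _.
  have -> : Xf * Xg * ((nn + 1) * Cr * W * ((nn + 1) * Cr * W)) = ((nn + 1) * (nn + 1) * (Cr * Cr)) * (Xf * Xg * (W * W)) by ring.
  apply Rmult_le_compat_l; last exact HX.
  nra.
remember (32 * an * (nn - an)) as K0 eqn:EK0.

have HK0 : 0 <= K0 by rewrite EK0; nra.
have HCC : 0 <= Cr * Cr by nra.
have He0 : 0 < e by rewrite Ee; apply exp_pos.
have HC0' : 0 <= Cr by lra.
rewrite [Cr ^ 2]/= Rmult_1_r.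
case: (Rle_lt_dec 1 (K0 * e)) => Hc.
- have : Cr * Cr <= K0 * e * (Cr * Cr) by nra.
  lra.
- have h3 : (nn + 1) * (nn + 1) * (e * e) <= K0 * e.
    have h4 : 0 <= nn + 1 by lra.
    have : (nn + 1) * e <= K0 * e by apply Rmult_le_compat_r; lra.
    have : 0 <= (nn + 1) * e by nra.
    nra.
  have : (nn + 1) * (nn + 1) * (Cr * Cr) * (e * e) <= K0 * e * (Cr * Cr).
    nra.
  lra.
Qed.
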